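(* Let $A$ and $B$ be finite groups. Then the direct product $A \times B$ is weakly-top if and only if both $A$ and $B$ are weakly-top. Likewise, $A \times B$ is top if and only if both $A$ and $B$ are top.
   Context: For a group $H$, $H'$ denotes its commutator subgroup. A finite group $G$ is weakly-top if $|H/H'| \leq |G/G'|$ for every proper subgroup $H<G$, and top if $|H/H'| < |G/G'|$ for every proper subgroup $H<G$. *)

(* Defs.v *)
From mathcomp Require Import all_boot all_fingroup all_solvable.
Set Implicit Arguments. Unset Strict Implicit. Unset Printing Implicit Defensive.
Local Open Scope group_scope.

Definition abel_order (gT : finGroupType) (G : {group gT}) : nat :=
  #|G / G^`(1)|.

Definition weakly_top (gT : finGroupType) (G : {group gT}) : Prop :=
  forall H : {group gT}, H \proper G -> abel_order H <= abel_order G.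

Definition top (gT : finGroupType) (G : {group gT}) : Prop :=
  forall H : {group gT}, H \proper G -> abel_order H < abel_order G.

(* Main.v *)
Require Import Defs.
From mathcomp Require Import all_boot all_fingroup all_solvable.
From mathcomp Require Import zify.
Set Implicit Arguments. Unset Strict Implicit. Unset Printing Implicit Defensive.
Local Open Scope group_scope.

Lemma abE (gT : finGroupType) (G : {group gT}) : #|G| = (#|G^`(1)| * abel_order G)%N.
Proof. by rewrite /abel_order card_quotient ?der_norm // Lagrange ?der_sub. Qed.

Lemma ab_setX (aT bT : finGroupType) (H : {group aT}) (K : {group bT}) :
  abel_order (setX_group H K) = (abel_order H * abel_order K)%N.
Proof.
have dP := setX_dprod H K.
have dD := der_dprod 1 dP.
have c1 : forall n : nat, #|(setX H [1 bT])^`(n)| = #|H^`(n)|.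
  move=> n; rewrite -morphim_pairg1 -(morphim_der [morphism of @pairg1 aT bT] _ (subsetT H)).
  by rewrite card_injm ?injm_pairg1 ?subsetT.
have c2 : forall n : nat, #|(setX [1 aT] K)^`(n)| = #|K^`(n)|.
  move=> n; rewrite -morphim_pair1g -(morphim_der [morphism of @pair1g aT bT] _ (subsetT K)).
  by rewrite card_injm ?injm_pair1g ?subsetT.
have e0 := dprod_card dP. have e1 := dprod_card dD.
have c10 : #|setX H [1 bT]| = #|H| := c1 0%N.
have c20 : #|setX [1 aT] K| = #|K| := c2 0%N.
rewrite c10 c20 in e0. rewrite c1 c2 in e1.
have f1 := abE H. have f2 := abE K. have f3 := abE (setX_group H K).
have p1 : 0 < #|H^`(1)| by apply: cardG_gt0.
have p2 : 0 < #|K^`(1)| by apply: cardG_gt0.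
rewrite /= in f3.
rewrite -e1 in f3.
rewrite -e0 f1 f2 in f3.
apply/eqP; rewrite -(@eqn_pmul2l (#|H^`(1)| * #|K^`(1)|)) ?muln_gt0 ?p1 ?p2 //.
apply/eqP; rewrite -f3; lia.
Qed.
Lemma ab_gt0 (gT : finGroupType) (G : {group gT}) : 0 < abel_order G.
Proof. exact: cardG_gt0. Qed.

Lemma ab_morph (aT rT : finGroupType) (D : {group aT}) (f : {morphism D >-> rT})
  (K : {group aT}) : K \subset D ->
  abel_order K <= abel_order ('ker_K f) * abel_order (f @* K).
Proof.
move=> sKD.
set N := 'ker_K f.
have e4 : #|K| = (#|f @* K| * #|N|)%N.
  by rewrite card_morphim (setIidPr sKD) mulnC LagrangeI.
have sK'D : K^`(1) \subset D by apply: subset_trans (der_sub 1 K) sKD.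
have e5 : #|K^`(1)| = (#|(f @* K)^`(1)| * #|K^`(1) :&: 'ker f|)%N.
  by rewrite -morphim_der // card_morphim (setIidPr sK'D) mulnC LagrangeI.
have e6 : #|N^`(1)| <= #|K^`(1) :&: 'ker f|.
  apply: subset_leq_card; rewrite subsetI dergS ?subsetIl //=.
  exact: subset_trans (der_sub 1 _) (subsetIr _ _).
have e1 := abE K. have e2 := abE [group of N]. have e3 := abE [group of f @* K].
set a := abel_order K in e1 *. set b := abel_order _ in e2 *.
set c := abel_order (f @* K) in e3 *.
rewrite /= in e2 e3.
set x := #|K^`(1)| in e1 e5. set y := #|N^`(1)| in e2 e6.
set z := #|(f @* K)^`(1)| in e3 e5. set w := #|_ :&: 'ker f| in e5 e6.
have xp : 0 < x by apply: cardG_gt0.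
have yp : 0 < y by apply: cardG_gt0.
have zp : 0 < z by apply: cardG_gt0.
have P : 0 < x * y * z by rewrite !muln_gt0 xp yp zp.
rewrite -(leq_pmul2r P).
have -> : (b * c * (x * y * z) = x * #|K|)%N.
  by rewrite e4 e3 e2; lia.
have -> : (a * (x * y * z) = #|K| * y * z)%N by rewrite e1; lia.
have -> : (#|K| * y * z = #|K| * (y * z))%N by lia.
have -> : (x * #|K| = #|K| * (w * z))%N by rewrite e5; lia.
rewrite leq_pmul2l ?cardG_gt0 // leq_pmul2r //.
Qed.

Lemma ab_injm (aT rT : finGroupType) (D : {group aT}) (f : {morphism D >-> rT})
  (G : {group aT}) : G \subset D -> G :&: 'ker f \subset [1 aT] ->
  abel_order (f @* G) = abel_order G.
Proof.
move=> sGD kG.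
have cc : forall L : {group aT}, L \subset G -> #|f @* L| = #|L|.
  move=> L sLG; rewrite card_morphim (setIidPr (subset_trans sLG sGD)).
  rewrite -divgI.
  have -> : L :&: 'ker f = 1.
    apply/eqP; rewrite eqEsubset sub1G andbT.
    exact: subset_trans (setSI _ sLG) kG.
  by rewrite cards1 divn1.
have e1 := abE G. have e2 := abE [group of f @* G].
rewrite /= -morphim_der // !cc ?der_sub // in e2.
rewrite e1 in e2.
have p : 0 < #|G^`(1)| by apply: cardG_gt0.
by apply/eqP; rewrite -(eqn_pmul2l p) e2.
Qed.

Lemma wt_sub (gT : finGroupType) (G H : {group gT}) :
  weakly_top G -> H \subset G -> abel_order H <= abel_order G.
Proof.
move=> W sHG; case: (boolP (G \subset H)) => sGH.
  have E : (H : {set gT}) = G by apply/eqP; rewrite eqEsubset sHG sGH.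
  by rewrite /abel_order E.
by apply: W; rewrite properE sHG sGH.
Qed.

Lemma top_wt (gT : finGroupType) (G : {group gT}) : top G -> weakly_top G.
Proof. by move=> T H pH; apply: ltnW; apply: T. Qed.

Section Main.
Variables (aT bT : finGroupType) (A : {group aT}) (B : {group bT}).

Lemma properX1 (H : {group aT}) : H \proper A -> setX_group H B \proper setX_group A B.
Proof.
rewrite !properE => /andP[sHA nAH]; rewrite /= setXS //=.
apply: contra nAH => S; apply/subsetP => a aA.
have : (a, 1) \in setX A B by rewrite inE /= aA group1.
by move/(subsetP S); rewrite inE => /andP[].
Qed.

Lemma proper1X (H : {group bT}) : H \proper B -> setX_group A H \proper setX_group A B.
Proof.
rewrite !properE => /andP[sHA nAH]; rewrite /= setXS //=.
apply: contra nAH => S; apply/subsetP => a aA.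
have : (1, a) \in setX A B by rewrite inE /= aA group1.
by move/(subsetP S); rewrite inE => /andP[].
Qed.

Let fm := fst_morphism aT bT.
Let sm := snd_morphism aT bT.

Lemma key (K : {group (aT * bT)}) :
  abel_order K <= abel_order (fm @* 'ker_K sm) * abel_order (sm @* K).
Proof.
rewrite ab_injm ?subsetT //; first exact: ab_morph (subsetT K).
apply/subsetP => x /setIP[/setIP[_ /mker k2] /mker k1].
apply/set1P; move: k1 k2; case: x => a b /= -> ->; done.
Qed.

Lemma fullK (K : {group (aT * bT)}) : K \subset setX A B ->
  fm @* 'ker_K sm = A -> sm @* K = B -> (K : {set _}) = setX A B.
Proof.
move=> sK e1 e2; apply/eqP; rewrite eqEsubset sK /=.
apply/subsetP => -[a b]; rewrite inE /= => /andP[aA bB].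
move: bB; rewrite -e2 => /morphimP[x _ xK /= ->].
have : x \in setX A B by apply: (subsetP sK).
case: x xK => a' b' xK; rewrite inE /= => /andP[a'A _].
have : a'^-1 * a \in fm @* 'ker_K sm by rewrite e1 groupM ?groupV.
case/morphimP => y _ /setIP[yK /mker y2] /= ye.
have -> : (a, b') = (a', b') * y.
  move: y2 ye; case: y yK => c d yK /= -> <-.
  rewrite /mulg /= /mul_pair /=; congr (_, _).
    by apply: esym; apply: (mulKVg a' a).
  by apply: esym; apply: (mulg1 b').
exact: groupM xK yK.
Qed.

End Main.

Theorem lemma2p3 (aT bT : finGroupType) (A : {group aT}) (B : {group bT}) :
  (weakly_top (setX_group A B) <-> weakly_top A /\ weakly_top B) /\
  (top (setX_group A B) <-> top A /\ top B).
Proof.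
have sN : forall K : {group (aT * bT)}, K \subset setX A B ->
    fst_morphism aT bT @* 'ker_K (snd_morphism aT bT) \subset A.
  move=> K sK; apply/subsetP => a /morphimP[x _ /setIP[xK _] ->].
  by have := subsetP sK x xK; rewrite inE => /andP[].
have sS : forall K : {group (aT * bT)}, K \subset setX A B ->
    snd_morphism aT bT @* K \subset B.
  move=> K sK; apply/subsetP => a /morphimP[x _ xK ->].
  by have := subsetP sK x xK; rewrite inE => /andP[].
have pA := ab_gt0 A. have pB := ab_gt0 B.
split; split.
- move=> W; split.
    move=> H pH; have := W _ (@properX1 _ _ A B H pH).
    by rewrite !ab_setX leq_pmul2r.
  move=> H pH; have := W _ (@proper1X _ _ A B H pH).
  by rewrite !ab_setX leq_pmul2l.
- case=> WA WB K pK; have sK := proper_sub pK.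
  apply: leq_trans (key K) _; rewrite ab_setX.
  by apply: leq_mul; apply: wt_sub => //; [apply: sN | apply: sS].
- move=> W; split.
    move=> H pH; have := W _ (@properX1 _ _ A B H pH).
    by rewrite !ab_setX ltn_pmul2r.
  move=> H pH; have := W _ (@proper1X _ _ A B H pH).
  by rewrite !ab_setX ltn_pmul2l.
- case=> TA TB K pK; have sK := proper_sub pK.
  have k := key K; rewrite ab_setX.
  have lN := wt_sub (top_wt TA) (sN K sK).
  have lS := wt_sub (top_wt TB) (sS K sK).
  case: (boolP (A \subset fst_morphism aT bT @* 'ker_K (snd_morphism aT bT))) => AN.
    case: (boolP (B \subset snd_morphism aT bT @* K)) => BS.
      exfalso; move: pK; rewrite properE => /andP[_]; apply/negP/negPn.
      rewrite /= -(fullK sK); first by [].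
        by apply/eqP; rewrite eqEsubset sN.
      by apply/eqP; rewrite eqEsubset sS.
    have lt : abel_order (snd_morphism aT bT @* K) < abel_order B.
      by apply: TB; rewrite properE sS.
    apply: leq_ltn_trans k _; apply: leq_ltn_trans (leq_mul lN (leqnn _)) _.
    by rewrite ltn_pmul2l.
  have lt : abel_order (fst_morphism aT bT @* 'ker_K (snd_morphism aT bT)) < abel_order A.
    by apply: TA; rewrite properE sN.
  apply: leq_ltn_trans k _; apply: leq_ltn_trans (leq_mul (leqnn _) lS) _.
  by rewrite ltn_pmul2r.
Qed.
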